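(* Let $P$ be a finite lattice and $f\in\mathcal{L}_P$, and let $\mathcal{W}_f=\{w\in\mathcal{L}_P: w\le f,\ w\text{ prime}\}=\{w_1,\dots,w_m\}$. Then $f=w_1+\cdots+w_m$.
   Context: $P$ is a finite lattice. $\mathcal{L}_P$ is the set of maps $f:P\to P$ satisfying (A.1) $a\le f(a)$; (A.2) $a\le b\Rightarrow f(a)\le f(b)$; (A.3) $f(f(a))=f(a)$, ordered pointwise; it is a lattice with join $+$. $\Phi f=\{a:f(a)=a\}$. $f$ is prime if $P\setminus\Phi f$ is closed under $\wedge$. *)

(* Defs.v *)
From HB Require Import structures.
From mathcomp Require Import all_boot all_order.
Set Implicit Arguments. Unset Strict Implicit. Unset Printing Implicit Defensive.
Import Order.TTheory.
Local Open Scope order_scope.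

Section Closure.
Context {d : Order.disp_t} {P : finLatticeType d}.

Definition in_LP (f : P -> P) : Prop :=
  [/\ (forall a, a <= f a),
      (forall a b, a <= b -> f a <= f b) &
      (forall a, f (f a) = f a)].

Definition LP_le (f g : P -> P) : Prop := forall a, f a <= g a.

Definition Phi (f : P -> P) : pred P := fun a => f a == a.

Definition prime_op (f : P -> P) : Prop :=
  forall a b, ~~ Phi f a -> ~~ Phi f b -> ~~ Phi f (a `&` b).

Definition W (f : P -> P) (w : P -> P) : Prop :=
  in_LP w /\ LP_le w f /\ prime_op w.

Definition is_join_LP (S : (P -> P) -> Prop) (f : P -> P) : Prop :=
  [/\ in_LP f,
      (forall w, S w -> LP_le w f) &
      (forall g, in_LP g -> (forall w, S w -> LP_le w g) -> LP_le f g)].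
End Closure.

(* Main.v *)
Require Import Defs.
From HB Require Import structures.
From mathcomp Require Import all_boot all_order.
Import Order.TTheory.
Local Open Scope order_scope.

Theorem mainTheorem14 (d : Order.disp_t) (P : finLatticeType d) (f : P -> P)
  (hf : in_LP f) : is_join_LP (W f) f.
Proof.
case: hf => [ext mon idem].
split => //.
- by move=> w; rewrite /W; case=> _ [H _]; exact: H.
move=> g _ Hg a.
pose w := fun x : P => if a <= x then x `|` f a else x.
have wa : w a = f a by rewrite /w lexx; apply: join_r.
have Ww : W f w.
  split; [split|split].
  + by move=> x; rewrite /w; case: ifP => // _; apply: leUl.
  + move=> x y lexy; rewrite /w.
    case: (boolP (a <= x)) => ax.
      by rewrite (le_trans ax lexy); apply: leU2.
    case: ifP => // _; exact: le_trans lexy (leUl _ _).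
  + move=> x; rewrite /w; case: (boolP (a <= x)) => ax; last by rewrite (negbTE ax).
    by rewrite (le_trans ax (leUl x (f a))) -joinA joinxx.
  + move=> x; rewrite /w; case: ifP => ax //.
    rewrite leUx ext /=; exact: mon.
  + move=> x y; rewrite /Phi /w.
    case: ifP => ax; last by rewrite eqxx.
    case: ifP => ay; last by rewrite eqxx.
    rewrite lexI ax ay /= !eq_joinl => nx ny; apply/negP => hxy.
    by move/negP: nx; apply; apply: le_trans hxy (leIl _ _).
have := Hg w Ww a; by rewrite wa.
Qed.
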